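(* For $n\in\mathbb{N}^\star$ let $\phi_n(x)=\int_0^\pi e^{-2x\sin\eta}e^{2in\eta}\,\mathrm{d}\eta$ and define $\varphi_n(x)=n\,\phi_n(nx)$ for $x>0$. Define functions $\Psi_k$ on $(0,\infty)$ by $$\Psi_0(x)=\frac{x}{1+x^2},\qquad \Psi_{k+1}(x)=\frac{x^2}{4(1+x^2)}\Big(\Psi_k''(x)+\frac1x\Psi_k'(x)\Big),\quad k\in\mathbb{N}.$$ For $n\ge1$ and $N\in\mathbb{N}$ define $g_{n,N}$ by $\varphi_n(x)=\sum_{k=0}^N n^{-2k}\Psi_k(x)+g_{n,N}(x)$, $x>0$. Then for every $N\in\mathbb{N}$ and $\delta\in[0,\tfrac13)$ there is a constant $C=C(N,\delta)>0$, independent of $n$ and $x$, such that $$|g_{n,N}(x)|\le\frac{C}{n^{2N+\frac23-\delta}}\,\frac{x^\delta}{1+x}\qquad\text{for all }x>0,\ n\ge1.$$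
   Context: $\mathbb{N}=\{0,1,2,\dots\}$, $\mathbb{N}^\star=\{1,2,\dots\}$. *)

(* Defs.v *)
From Stdlib Require Import Reals.
From Coquelicot Require Import Coquelicot.
Open Scope R_scope.

Definition expi (t : R) : C := (cos t, sin t).

Definition phi (n : nat) (x : R) : C :=
  @RInt C_R_CompleteNormedModule (fun eta : R => Cmult (RtoC (exp (-2 * x * sin eta))) (expi (2 * INR n * eta))) 0 PI.

Definition varphi (n : nat) (x : R) : C := Cmult (RtoC (INR n)) (phi n (INR n * x)).

Fixpoint Psi (k : nat) : R -> R :=
  match k with
  | O => fun x => x / (1 + x ^ 2)
  | S k' => fun x => x ^ 2 / (4 * (1 + x ^ 2)) *
              (Derive_n (Psi k') 2 x + / x * Derive (Psi k') x)
  end.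

Definition g (n N : nat) (x : R) : C :=
  Cminus (varphi n x) (RtoC (sum_f_R0 (fun k => / (INR n) ^ (2 * k) * Psi k x) N)).

(* Main.v *)
Require Import Defs.
From Stdlib Require Import Reals Lra Lia.
From Coquelicot Require Import Coquelicot.
Open Scope R_scope.


Definition Jf (n m : nat) (y t : R) : R :=
  sin t ^ m * exp (-2 * y * sin t) * cos (2 * INR n * t).
Definition J (n m : nat) (y : R) : R := RInt (Jf n m y) 0 PI.
Definition K (n m : nat) (y : R) : R := y ^ m * J n m y.

Lemma cont_pt_of_cont f x : continuous f x -> continuity_pt f x.
Proof. intro H. apply continuity_pt_filterlim. exact H. Qed.

Lemma Jf_cont n m y t : continuous (Jf n m y) t.
Proof. apply (ex_derive_continuous (K:=R_AbsRing) (V:=R_NormedModule)). unfold Jf. auto_derive. auto. Qed.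

Lemma ex_RInt_Jf n m y a b : ex_RInt (Jf n m y) a b.
Proof. apply (ex_RInt_continuous (V:=R_CompleteNormedModule)). intros; apply Jf_cont. Qed.

Lemma Jf_deriv n m y t : is_derive (fun u => Jf n m u t) y (-2 * Jf n (S m) y t).
Proof. unfold Jf. auto_derive; auto. simpl. ring. Qed.

Lemma Jf_2d n m x t : continuity_2d_pt (Jf n m) x t.
Proof.
  unfold Jf.
  apply continuity_2d_pt_mult.
  apply continuity_2d_pt_mult.
  - apply (continuity_1d_2d_pt_comp (fun z => sin z ^ m) (fun _ v => v)).
    + apply cont_pt_of_cont, (ex_derive_continuous (K:=R_AbsRing) (V:=R_NormedModule)). auto_derive. auto.
    + apply continuity_2d_pt_id2.
  - apply (continuity_1d_2d_pt_comp exp (fun u v => -2 * u * sin v)).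
    + apply cont_pt_of_cont, (ex_derive_continuous (K:=R_AbsRing) (V:=R_NormedModule)). auto_derive. auto.
    + apply continuity_2d_pt_mult.
      * apply continuity_2d_pt_mult. apply continuity_2d_pt_const. apply continuity_2d_pt_id1.
      * apply (continuity_1d_2d_pt_comp sin (fun _ v => v)).
        apply cont_pt_of_cont, (ex_derive_continuous (K:=R_AbsRing) (V:=R_NormedModule)). auto_derive. auto.
        apply continuity_2d_pt_id2.
  - apply (continuity_1d_2d_pt_comp (fun z => cos (2 * INR n * z)) (fun _ v => v)).
    + apply cont_pt_of_cont, (ex_derive_continuous (K:=R_AbsRing) (V:=R_NormedModule)). auto_derive. auto.
    + apply continuity_2d_pt_id2.
Qed.

Lemma J_deriv n m y : is_derive (J n m) y (-2 * J n (S m) y).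
Proof.
  unfold J.
  assert (H := is_derive_RInt_param (Jf n m) 0 PI y).
  assert (E : RInt (fun t => Derive (fun u => Jf n m u t) y) 0 PI = -2 * RInt (Jf n (S m) y) 0 PI).
  { apply is_RInt_unique.
    apply (is_RInt_ext (fun t => scal (-2) (Jf n (S m) y t))).
    intros t _. symmetry. apply is_derive_unique. apply Jf_deriv.
    apply (is_RInt_scal (V:=R_NormedModule)). apply (RInt_correct (V:=R_CompleteNormedModule)). apply ex_RInt_Jf. }
  rewrite <- E. apply H.
  - apply filter_forall. intros x0 t _. eexists. apply Jf_deriv.
  - intros t _. apply continuity_2d_pt_ext with (f := fun u v => -2 * Jf n (S m) u v).
    intros u v. symmetry. apply is_derive_unique. apply Jf_deriv.
    apply continuity_2d_pt_mult. apply continuity_2d_pt_const. apply Jf_2d.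
  - apply filter_forall. intros. apply ex_RInt_Jf.
Qed.


Lemma isd_eq (f : R -> R) (x l l' : R) : is_derive f x l' -> l' = l -> is_derive f x l.
Proof. intros H ->. exact H. Qed.

Lemma isd_mult (f g : R -> R) x a b : is_derive f x a -> is_derive g x b ->
  is_derive (fun t => f t * g t) x (a * g x + f x * b).
Proof. intros Ha Hb. apply (is_derive_mult f g x a b Ha Hb). intros; apply Rmult_comm. Qed.

Lemma isd_plus (f g : R -> R) x a b : is_derive f x a -> is_derive g x b ->
  is_derive (fun t => f t + g t) x (a + b).
Proof. intros Ha Hb. apply (is_derive_plus f g x a b Ha Hb). Qed.

Lemma isd_const (c : R) x : is_derive (fun _ => c) x 0.
Proof. apply (is_derive_const c x). Qed.

Lemma isd_id x : is_derive (fun t : R => t) x 1.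
Proof. apply (is_derive_id x). Qed.

Lemma K_deriv n m y : is_derive (K n m) y (INR m * y ^ pred m * J n m y + y ^ m * (-2 * J n (S m) y)).
Proof.
  unfold K. apply isd_mult. 2: apply J_deriv.
  apply isd_eq with (INR m * 1 * y ^ pred m). apply (is_derive_pow (fun t => t) m y 1). apply isd_id. ring.
Qed.

Definition kf (n m : nat) (x : R) : R := INR n * K n m (INR n * x).

Lemma kf_theta n m x : x <> 0 ->
  is_derive (kf n m) x ((INR m * kf n m x - 2 * kf n (S m) x) / x).
Proof.
  intro Hx. unfold kf.
  apply isd_eq with (INR n * (INR n * (INR m * (INR n * x) ^ pred m * J n m (INR n * x) + (INR n * x) ^ m * (-2 * J n (S m) (INR n * x))))).
  - apply isd_eq with (INR n * scal (INR n) (INR m * (INR n * x) ^ pred m * J n m (INR n * x) + (INR n * x) ^ m * (-2 * J n (S m) (INR n * x)))); [|reflexivity].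
    apply isd_eq with ((0 * K n m (INR n * x)) + INR n * scal (INR n) (INR m * (INR n * x) ^ pred m * J n m (INR n * x) + (INR n * x) ^ m * (-2 * J n (S m) (INR n * x)))); [|ring].
    apply (isd_mult (fun _ => INR n) (fun t => K n m (INR n * t))). apply isd_const.
    apply (is_derive_comp (K n m) (fun t => INR n * t)). apply K_deriv.
    apply isd_eq with (0 * x + INR n * 1). apply isd_mult. apply isd_const. apply isd_id. ring.
  - unfold K. destruct m.
    + simpl. field. exact Hx.
    + rewrite S_INR. simpl. field. exact Hx.
Qed.


Definition Gf (n : nat) (y t : R) : R :=
  -2 * y * cos t * exp (-2 * y * sin t) * cos (2 * INR n * t)
  + 2 * INR n * exp (-2 * y * sin t) * sin (2 * INR n * t).
Definition dGf (n : nat) (y t : R) : R :=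
  (4 * y ^ 2 * cos t ^ 2 + 2 * y * sin t + 4 * INR n ^ 2) * exp (-2 * y * sin t) * cos (2 * INR n * t).

Lemma Gf_deriv n y t : is_derive (Gf n y) t (dGf n y t).
Proof. unfold Gf, dGf. auto_derive. auto. ring. Qed.

Lemma cos2n n : cos (2 * INR n * PI) = 1.
Proof. replace (2 * INR n * PI) with (0 + 2 * INR n * PI) by ring. rewrite cos_period. apply cos_0. Qed.
Lemma sin2n n : sin (2 * INR n * PI) = 0.
Proof. replace (2 * INR n * PI) with (0 + 2 * INR n * PI) by ring. rewrite sin_period. apply sin_0. Qed.

Lemma J_ode n y : 4 * INR n ^ 2 * J n 0 y + 4 * y ^ 2 * (J n 0 y - J n 2 y) + 2 * y * J n 1 y = 4 * y.
Proof.
  assert (H1 : is_RInt (dGf n y) 0 PI (minus (Gf n y PI) (Gf n y 0))).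
  { apply (is_RInt_derive (V:=R_CompleteNormedModule)).
    - intros; apply Gf_deriv.
    - intros. apply (ex_derive_continuous (K:=R_AbsRing) (V:=R_NormedModule)). unfold dGf. auto_derive. auto. }
  assert (V1 : minus (Gf n y PI) (Gf n y 0) = 4 * y).
  { unfold Gf. rewrite cos2n, sin2n, cos_PI, sin_PI, cos_0, sin_0.
    replace (2 * INR n * 0) with 0 by ring. rewrite cos_0, sin_0.
    replace (-2 * y * 0) with 0 by ring. rewrite exp_0. repeat (unfold minus, plus, opp; simpl). ring. }
  assert (I0 := RInt_correct (V:=R_CompleteNormedModule) _ _ _ (ex_RInt_Jf n 0 y 0 PI)).
  assert (I1 := RInt_correct (V:=R_CompleteNormedModule) _ _ _ (ex_RInt_Jf n 1 y 0 PI)).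
  assert (I2 := RInt_correct (V:=R_CompleteNormedModule) _ _ _ (ex_RInt_Jf n 2 y 0 PI)).
  assert (H2 : is_RInt (fun t => plus (plus (scal (4 * y ^ 2) (minus (Jf n 0 y t) (Jf n 2 y t))) (scal (2 * y) (Jf n 1 y t))) (scal (4 * INR n ^ 2) (Jf n 0 y t))) 0 PI
     (plus (plus (scal (4 * y ^ 2) (minus (J n 0 y) (J n 2 y))) (scal (2 * y) (J n 1 y))) (scal (4 * INR n ^ 2) (J n 0 y)))).
  { apply (is_RInt_plus (V:=R_NormedModule)). apply (is_RInt_plus (V:=R_NormedModule)).
    apply (is_RInt_scal (V:=R_NormedModule)). apply (is_RInt_minus (V:=R_NormedModule)); assumption.
    apply (is_RInt_scal (V:=R_NormedModule)); assumption.
    apply (is_RInt_scal (V:=R_NormedModule)); assumption. }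
  apply (is_RInt_ext _ (dGf n y)) in H2.
  2: { intros t _. unfold Jf, dGf. repeat (unfold plus, scal, minus, opp, mult; simpl).
       pose proof (sin2_cos2 t). unfold Rsqr in H. 
       replace (cos t * (cos t * 1)) with (1 - sin t * sin t) by lra. ring. }
  apply (is_RInt_unique (V:=R_CompleteNormedModule)) in H1. apply (is_RInt_unique (V:=R_CompleteNormedModule)) in H2.
  rewrite V1 in H1. rewrite H1 in H2. rewrite H2.
  repeat (unfold plus, scal, minus, opp, mult; simpl). ring.
Qed.


Definition hs (n : nat) (y t : R) : R := exp (-2 * y * sin t) * sin (2 * INR n * t).

Lemma ex_RInt_hs n y : ex_RInt (hs n y) 0 PI.
Proof.
  apply (ex_RInt_continuous (V:=R_CompleteNormedModule)). intros.
  apply (ex_derive_continuous (K:=R_AbsRing) (V:=R_NormedModule)). unfold hs. auto_derive. auto.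
Qed.

Lemma RInt_hs n y : RInt (hs n y) 0 PI = 0.
Proof.
  assert (E := RInt_comp_lin (V:=R_CompleteNormedModule) (hs n y) (-1) PI 0 PI).
  replace (-1 * 0 + PI) with PI in E by ring. replace (-1 * PI + PI) with 0 in E by ring.
  specialize (E (ex_RInt_swap _ _ _ (ex_RInt_hs n y))).
  rewrite <- (opp_RInt_swap (V:=R_CompleteNormedModule) (hs n y) 0 PI) in E. 2: apply ex_RInt_hs.
  rewrite (RInt_ext _ (hs n y)) in E.
  2: { intros t _. unfold hs. repeat (unfold scal, mult, opp; simpl).
       replace (-1 * t + PI) with (PI - t) by ring. rewrite sin_PI_x.
       replace (2 * INR n * (PI - t)) with (2 * INR n * PI - 2 * INR n * t) by ring.
       rewrite sin_minus, sin2n, cos2n. ring. }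
  repeat (unfold opp in E; simpl in E). lra.
Qed.

Lemma phi_real n y : phi n y = RtoC (J n 0 y).
Proof.
  unfold phi. apply (is_RInt_unique (V:=C_R_CompleteNormedModule)).
  apply (is_RInt_fct_extend_pair (U:=R_NormedModule) (V:=R_NormedModule)).
  - simpl. apply (is_RInt_ext (Jf n 0 y)).
    intros t _. unfold Jf, expi, RtoC; simpl. ring.
    apply (RInt_correct (V:=R_CompleteNormedModule)). apply ex_RInt_Jf.
  - simpl. apply (is_RInt_ext (hs n y)).
    intros t _. unfold hs, expi, RtoC; simpl. ring.
    assert (H := RInt_correct (V:=R_CompleteNormedModule) _ _ _ (ex_RInt_hs n y)). rewrite RInt_hs in H. exact H.
Qed.


Definition u (x : R) : R := / (1 + x ^ 2).

Lemma u_pos x : 0 < 1 + x ^ 2.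
Proof. nra. Qed.

Inductive Cf : (R -> R) -> Prop :=
| Cf_c c : Cf (fun _ => c)
| Cf_u : Cf u
| Cf_plus f g : Cf f -> Cf g -> Cf (fun x => f x + g x)
| Cf_mult f g : Cf f -> Cf g -> Cf (fun x => f x * g x).

Lemma Cf_theta f : Cf f -> exists f', Cf f' /\ forall x, 0 < x -> is_derive f x (f' x / x).
Proof.
  induction 1.
  - exists (fun _ => 0). split. apply Cf_c. intros x Hx.
    apply isd_eq with 0. apply isd_const. field. lra.
  - exists (fun x => (-2) * u x + 2 * (u x * u x)). split.
    + apply Cf_plus; apply Cf_mult; try apply Cf_c. apply Cf_u. apply Cf_mult; apply Cf_u.
    + intros x Hx. unfold u. auto_derive. pose proof (u_pos x). lra.
      pose proof (u_pos x). field. split; lra.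
  - destruct IHCf1 as [f' [Hf' Df]]. destruct IHCf2 as [g' [Hg' Dg]].
    exists (fun x => f' x + g' x). split. apply Cf_plus; auto.
    intros x Hx. apply isd_eq with (f' x / x + g' x / x). apply isd_plus; auto. field. lra.
  - destruct IHCf1 as [f' [Hf' Df]]. destruct IHCf2 as [g' [Hg' Dg]].
    exists (fun x => f' x * g x + f x * g' x). split. apply Cf_plus; apply Cf_mult; auto.
    intros x Hx. apply isd_eq with (f' x / x * g x + f x * (g' x / x)). apply isd_mult; auto. field. lra.
Qed.

Lemma Cf_bound f : Cf f -> exists B, 0 <= B /\ forall x, Rabs (f x) <= B.
Proof.
  induction 1.
  - exists (Rabs c). split. apply Rabs_pos. intros; lra.
  - exists 1. split. lra. intros x. unfold u. pose proof (u_pos x).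
    rewrite Rabs_pos_eq. 2: left; apply Rinv_0_lt_compat; lra.
    rewrite <- Rinv_1. apply Rinv_le_contravar. lra. nra.
  - destruct IHCf1 as [B1 [P1 H1]]. destruct IHCf2 as [B2 [P2 H2]].
    exists (B1 + B2). split. lra. intros x. eapply Rle_trans. apply Rabs_triang. specialize (H1 x); specialize (H2 x); lra.
  - destruct IHCf1 as [B1 [P1 H1]]. destruct IHCf2 as [B2 [P2 H2]].
    exists (B1 * B2). split. nra. intros x. rewrite Rabs_mult. apply Rmult_le_compat; auto; apply Rabs_pos.
Qed.

Definition Lop (f : R -> R) (x : R) : R :=
  x ^ 2 / (4 * (1 + x ^ 2)) * (Derive_n f 2 x + / x * Derive f x).

Lemma Psi_S k x : Psi (S k) x = Lop (Psi k) x.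
Proof. reflexivity. Qed.

Lemma loc_pos x : 0 < x -> locally x (fun z => 0 < z).
Proof.
  intro H. exists (mkposreal x H). intros z Hz.
  unfold ball in Hz; simpl in Hz. unfold AbsRing_ball, abs, minus, plus, opp in Hz; simpl in Hz.
  apply Rabs_lt_between' in Hz. lra.
Qed.

Lemma Lop_theta (f f1 f2 : R -> R) :
  (forall x, 0 < x -> is_derive f x (f1 x / x)) ->
  (forall x, 0 < x -> is_derive f1 x (f2 x / x)) ->
  forall x, 0 < x -> Lop f x = u x * f2 x / 4.
Proof.
  intros H1 H2 x Hx. unfold Lop. simpl Derive_n.
  rewrite (is_derive_unique f x _ (H1 x Hx)).
  rewrite (Derive_ext_loc (Derive f) (fun z => f1 z * / z)).
  2: { apply filter_imp with (2 := loc_pos x Hx). intros z Hz. apply is_derive_unique. apply H1. exact Hz. }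
  assert (D : is_derive (fun z => f1 z * / z) x (f2 x / x * / x + f1 x * (- / x ^ 2))).
  { apply isd_mult. apply H2; exact Hx.
    auto_derive. lra. field. lra. }
  match goal with |- context [Derive ?F x] => assert (E : Derive F x = f2 x / x * / x + f1 x * (- / x ^ 2)) by (apply is_derive_unique; exact D) end.
  rewrite E.
  unfold u. pose proof (u_pos x). field. repeat split; lra.
Qed.

Lemma Lop_ext (f h : R -> R) : (forall z, 0 < z -> f z = h z) ->
  forall x, 0 < x -> Lop f x = Lop h x.
Proof.
  intros E x Hx. unfold Lop.
  rewrite (Derive_n_ext_loc f h 2 x). rewrite (Derive_ext_loc f h x). reflexivity.
  all: apply filter_imp with (2 := loc_pos x Hx); exact E.
Qed.

Definition TS2 (f : R -> R) := exists f1 f2 : R -> R, forall x, 0 < x ->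
  is_derive f x (f1 x / x) /\ is_derive f1 x (f2 x / x).

Lemma TS2_ext (f h : R -> R) : (forall z, 0 < z -> f z = h z) -> TS2 h -> TS2 f.
Proof.
  intros E [f1 [f2 H]]. exists f1, f2. intros x Hx. split. 2: apply H; auto.
  apply (is_derive_ext_loc h f). apply filter_imp with (2 := loc_pos x Hx).
  intros z Hz; symmetry; auto. apply H; auto.
Qed.

Lemma Lop_lin (f g : R -> R) (c : R) : TS2 f -> TS2 g ->
  forall x, 0 < x -> Lop (fun z => f z + c * g z) x = Lop f x + c * Lop g x.
Proof.
  intros [f1 [f2 Hf]] [g1 [g2 Hg]] x Hx.
  rewrite (Lop_theta f f1 f2), (Lop_theta g g1 g2), (Lop_theta _ (fun z => f1 z + c * g1 z) (fun z => f2 z + c * g2 z)); auto.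
  - lra.
  - intros z Hz. apply isd_eq with (f1 z / z + (0 * g z + c * (g1 z / z))).
    apply isd_plus. apply Hf; auto. apply (isd_mult (fun _ => c) g). apply isd_const. apply Hg; auto.
    field. lra.
  - intros z Hz. apply isd_eq with (f2 z / z + (0 * g1 z + c * (g2 z / z))).
    apply isd_plus. apply Hf; auto. apply (isd_mult (fun _ => c) g1). apply isd_const. apply Hg; auto.
    field. lra.
  - intros z Hz; apply Hg; auto.
  - intros z Hz; apply Hg; auto.
  - intros z Hz; apply Hf; auto.
  - intros z Hz; apply Hf; auto.
Qed.


Inductive W : (nat -> R -> R) -> Prop :=
| W_k m : (1 <= m)%nat -> W (fun n x => kf n m x)
| W_plus w1 w2 : W w1 -> W w2 -> W (fun n x => w1 n x + w2 n x)
| W_mult r w : Cf r -> W w -> W (fun n x => r x * w n x).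

Lemma W_theta w : W w -> exists w', W w' /\ forall n x, 0 < x -> is_derive (w n) x (w' n x / x).
Proof.
  induction 1.
  - exists (fun n x => INR m * kf n m x + (-2) * kf n (S m) x). split.
    + exact (W_plus _ _ (W_mult _ _ (Cf_c (INR m)) (W_k m H)) (W_mult _ _ (Cf_c (-2)) (W_k (S m) ltac:(lia)))).
    + intros n x Hx. apply isd_eq with ((INR m * kf n m x - 2 * kf n (S m) x) / x).
      apply kf_theta. lra. field. lra.
  - destruct IHW1 as [a [Ha Da]]. destruct IHW2 as [b [Hb Db]].
    exists (fun n x => a n x + b n x). split. exact (W_plus _ _ Ha Hb).
    intros n x Hx. apply isd_eq with (a n x / x + b n x / x). apply isd_plus; auto. field. lra.
  - destruct (Cf_theta r H) as [r' [Hr' Dr]]. destruct IHW as [a [Ha Da]].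
    exists (fun n x => r' x * w n x + r x * a n x). split.
    exact (W_plus _ _ (W_mult _ _ Hr' H0) (W_mult _ _ H Ha)).
    intros n x Hx. apply isd_eq with (r' x / x * w n x + r x * (a n x / x)). apply isd_mult; auto. field. lra.
Qed.

Lemma W_TS2 w : W w -> forall n, TS2 (w n).
Proof.
  intros Hw n. destruct (W_theta w Hw) as [a [Ha Da]]. destruct (W_theta a Ha) as [b [Hb Db]].
  exists (a n), (b n). intros x Hx. split; auto.
Qed.

Lemma Lop_W w : W w -> exists w2, W w2 /\ forall n x, 0 < x -> Lop (w n) x = w2 n x.
Proof.
  intros Hw. destruct (W_theta w Hw) as [a [Ha Da]]. destruct (W_theta a Ha) as [b [Hb Db]].
  exists (fun n x => (u x * / 4) * b n x). split.
  exact (W_mult _ _ (Cf_mult _ _ Cf_u (Cf_c (/4))) Hb).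
  intros n x Hx. rewrite (Lop_theta (w n) (a n) (b n)); auto. field.
Qed.

Lemma P_theta r : Cf r -> exists r1, Cf r1 /\ forall x, 0 < x -> is_derive (fun z => z * r z) x (x * r1 x / x).
Proof.
  intros Hr. destruct (Cf_theta r Hr) as [r' [Hr' Dr]].
  exists (fun x => r x + r' x). split. apply Cf_plus; auto.
  intros x Hx. apply isd_eq with (1 * r x + x * (r' x / x)). apply isd_mult. apply isd_id. auto. field. lra.
Qed.

Lemma Psi_rep k : exists r, Cf r /\ forall x, 0 < x -> Psi k x = x * r x.
Proof.
  induction k.
  - exists u. split. apply Cf_u. intros x Hx. simpl. unfold u. field. pose proof (u_pos x). lra.
  - destruct IHk as [r [Hr E]].
    destruct (P_theta r Hr) as [r1 [Hr1 D1]]. destruct (P_theta r1 Hr1) as [r2 [Hr2 D2]].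
    exists (fun x => u x * (r2 x * / 4)). split. apply Cf_mult. apply Cf_u. apply Cf_mult; auto. apply Cf_c.
    intros x Hx. rewrite Psi_S. rewrite (Lop_ext _ (fun z => z * r z)); auto.
    rewrite (Lop_theta _ (fun z => z * r1 z) (fun z => z * r2 z)); auto. field.
Qed.

Lemma Psi_TS2 k : TS2 (Psi k).
Proof.
  destruct (Psi_rep k) as [r [Hr E]]. apply TS2_ext with (fun z => z * r z); auto.
  destruct (P_theta r Hr) as [r1 [Hr1 D1]]. destruct (P_theta r1 Hr1) as [r2 [Hr2 D2]].
  exists (fun z => z * r1 z), (fun z => z * r2 z). intros x Hx; split; auto.
Qed.

Fixpoint T (j n : nat) : R -> R :=
  match j with O => kf n 0 | S j' => Lop (T j' n) end.

Lemma kf0_d1 n x : 0 < x -> is_derive (kf n 0) x ((-2 * kf n 1 x) / x).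
Proof. intro Hx. apply isd_eq with ((INR 0 * kf n 0 x - 2 * kf n 1 x) / x). apply kf_theta. lra. simpl. field. lra. Qed.

Lemma kf0_d2 n x : 0 < x -> is_derive (fun z => -2 * kf n 1 z) x ((-2 * (kf n 1 x - 2 * kf n 2 x)) / x).
Proof.
  intro Hx. apply isd_eq with (0 * kf n 1 x + -2 * ((INR 1 * kf n 1 x - 2 * kf n 2 x) / x)).
  apply (isd_mult (fun _ => -2) (kf n 1)). apply isd_const. apply kf_theta. lra. simpl. field. lra.
Qed.

Lemma T1_eq n x : 0 < x -> T 1 n x = u x * (-2 * (kf n 1 x - 2 * kf n 2 x)) / 4.
Proof.
  intro Hx. simpl. apply (Lop_theta (kf n 0) (fun z => -2 * kf n 1 z) (fun z => -2 * (kf n 1 z - 2 * kf n 2 z))); auto.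
  apply kf0_d1. apply kf0_d2.
Qed.

Lemma T_W j : exists w, W w /\ forall n x, 0 < x -> T (S j) n x = w n x.
Proof.
  induction j.
  - exists (fun n x => (u x * / 4) * ((-2) * (kf n 1 x + (-2) * kf n 2 x))). split.
    + exact (W_mult _ _ (Cf_mult _ _ Cf_u (Cf_c (/4))) (W_mult _ _ (Cf_c (-2)) (W_plus _ _ (W_k 1 (le_n 1)) (W_mult _ _ (Cf_c (-2)) (W_k 2 ltac:(lia)))))).
    + intros n x Hx. rewrite T1_eq; auto. field.
  - destruct IHj as [w [Hw E]]. destruct (Lop_W w Hw) as [w2 [Hw2 E2]].
    exists w2. split; auto. intros n x Hx.
    change (T (S (S j)) n x) with (Lop (T (S j) n) x).
    rewrite (Lop_ext _ (w n)); auto.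
Qed.

Lemma T_TS2 j n : TS2 (T (S j) n).
Proof.
  destruct (T_W j) as [w [Hw E]]. apply TS2_ext with (w n). auto. apply W_TS2; auto.
Qed.

Lemma ode n x : (1 <= n)%nat -> 0 < x -> kf n 0 x = Psi 0 x + / INR n ^ 2 * T 1 n x.
Proof.
  intros Hn Hx. rewrite T1_eq; auto.
  assert (Hn' : 1 <= INR n) by (apply (le_INR 1); auto).
  pose proof (J_ode n (INR n * x)) as O.
  pose proof (u_pos x).
  set (a := J n 0 (INR n * x)) in *. set (b := J n 1 (INR n * x)) in *. set (c := J n 2 (INR n * x)) in *.
  assert (E1 : 4 * INR n ^ 2 * (1 + x ^ 2) * a = 4 * INR n * x + 4 * INR n ^ 2 * x ^ 2 * c - 2 * INR n * x * b) by nra.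
  assert (Ea : a = (4 * INR n * x + 4 * INR n ^ 2 * x ^ 2 * c - 2 * INR n * x * b) / (4 * INR n ^ 2 * (1 + x ^ 2))).
  { rewrite <- E1. field. split; lra. }
  unfold kf, K, u. simpl Psi. fold a b c. rewrite Ea. field. split; lra.
Qed.


Lemma rec n (Hn : (1 <= n)%nat) j : forall x, 0 < x -> T j n x = Psi j x + / INR n ^ 2 * T (S j) n x.
Proof.
  induction j.
  - intros x Hx. apply ode; auto.
  - intros x Hx. change (T (S j) n x) with (Lop (T j n) x).
    rewrite (Lop_ext (T j n) (fun z => Psi j z + / INR n ^ 2 * T (S j) n z)); auto.
    rewrite Lop_lin; auto. apply Psi_TS2. apply T_TS2.
Qed.

Lemma sum_id n (Hn : (1 <= n)%nat) M x : 0 < x ->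
  kf n 0 x - sum_f_R0 (fun k => / INR n ^ (2 * k) * Psi k x) M = / INR n ^ (2 * S M) * T (S M) n x.
Proof.
  intro Hx.
  assert (Hn' : INR n <> 0) by (apply not_0_INR; lia).
  induction M as [|M IHM].
  - simpl sum_f_R0. rewrite (ode n x Hn Hx). simpl. field. split; auto. nra.
  - rewrite tech5.
    assert (E : kf n 0 x - (sum_f_R0 (fun k => / INR n ^ (2 * k) * Psi k x) M + / INR n ^ (2 * S M) * Psi (S M) x)
      = / INR n ^ (2 * S M) * T (S M) n x - / INR n ^ (2 * S M) * Psi (S M) x) by (rewrite <- IHM; ring).
    rewrite E. rewrite (rec n Hn (S M) x Hx).
    replace (2 * S (S M))%nat with (2 * S M + 2)%nat by lia. rewrite pow_add.
    field. split; auto. apply pow_nonzero; auto.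
Qed.


Lemma sin_lb_poly a : sin_lb a = a - a^3/6 + a^5/120 - a^7/5040.
Proof.
  unfold sin_lb, sin_approx. simpl sum_f_R0. unfold sin_term.
  change (Factorial.fact (2*0+1)) with 1%nat.
  change (Factorial.fact (2*1+1)) with 6%nat.
  change (Factorial.fact (2*2+1)) with 120%nat.
  change (Factorial.fact (2*3+1)) with 5040%nat.
  rewrite !INR_IZR_INZ. simpl Z.of_nat. simpl. field.
Qed.

Lemma sin_lb3 t : 0 <= t <= PI / 2 -> t / 3 <= sin t.
Proof.
  intros [H0 H1]. assert (P4 := PI_4). assert (P0 := PI_RGT_0).
  destruct (SIN t) as [S _]; try lra.
  rewrite sin_lb_poly in S. assert (t <= 2) by lra.
  assert (t ^ 2 <= 4) by nra.
  assert (0 <= t^4) by (apply pow_le; lra).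
  assert (t^4 * (1/120 - t^2/5040) >= 0) by nra.
  nra.
Qed.

Lemma exp_mono x y : x <= y -> exp x <= exp y.
Proof. intro H. destruct (Rle_lt_or_eq_dec x y H). left; apply exp_increasing; auto. subst; lra. Qed.

Lemma exp_pow k x : exp (INR k * x) = exp x ^ k.
Proof.
  induction k. simpl. replace (0 * x) with 0 by ring. apply exp_0.
  rewrite S_INR. replace ((INR k + 1) * x) with (INR k * x + x) by ring.
  rewrite exp_plus, IHk. simpl. ring.
Qed.

Lemma pow_le_exp k t : 0 <= t -> t ^ k <= INR k ^ k * exp t.
Proof.
  intro Ht. destruct k.
  - simpl. pose proof (exp_ineq1_le t). lra.
  - set (k' := S k). assert (Hk : 0 < INR k') by (apply lt_0_INR; unfold k'; lia).
    replace t with (INR k' * (t / INR k')) at 2 by (field; lra).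
    rewrite exp_pow.
    replace (t ^ k') with (INR k' ^ k' * (t / INR k') ^ k').
    2: { rewrite <- Rpow_mult_distr. f_equal. field. lra. }
    apply Rmult_le_compat_l. apply pow_le; lra.
    apply pow_incr. split. apply Rdiv_le_0_compat; lra.
    pose proof (exp_ineq1_le (t / INR k')). lra.
Qed.

Lemma key_pt m a : (1 <= m)%nat -> 0 <= a ->
  a ^ m * exp (-2 * a) <= INR (m - 1) ^ (m - 1) * (a * exp (- a)).
Proof.
  intros Hm Ha. replace m with (S (m - 1)) at 1 by lia. simpl pow.
  pose proof (pow_le_exp (m - 1) a Ha) as H.
  set (C := INR (m - 1) ^ (m - 1)) in *. set (p := a ^ (m - 1)) in *.
  replace (-2 * a) with (- a + - a) by ring. rewrite exp_plus.
  assert (E : exp a * exp (- a) = 1). { rewrite <- exp_plus. replace (a + - a) with 0 by ring. apply exp_0. }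
  assert (0 < exp (- a)) by apply exp_pos.
  assert (p * exp (- a) <= C). { replace C with (C * exp a * exp (- a)) by (rewrite Rmult_assoc, E; ring).
    apply Rmult_le_compat_r; lra. }
  assert (0 <= a * exp (- a)) by nra.
  replace (a * p * (exp (- a) * exp (- a))) with ((a * exp (- a)) * (p * exp (- a))) by ring.
  rewrite (Rmult_comm C). apply Rmult_le_compat_l; auto.
Qed.

Lemma aexp_le_y a y : 0 <= a <= y -> a * exp (- a) <= y.
Proof.
  intros [H0 H1]. assert (exp (- a) <= 1). { rewrite <- exp_0. apply exp_mono. lra. }
  assert (0 < exp (-a)) by apply exp_pos. nra.
Qed.

Lemma aexp_le_2 a : 0 <= a -> a * exp (- a) <= 2 * exp (- (a / 2)).
Proof.
  intro Ha. pose proof (exp_ineq1_le (a / 2)).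
  replace (- a) with (- (a/2) + - (a/2)) by field. rewrite exp_plus.
  assert (exp (- (a / 2)) * exp (a / 2) = 1). { rewrite <- exp_plus. replace (- (a/2) + a/2) with 0 by ring. apply exp_0. }
  assert (0 < exp (- (a/2))) by apply exp_pos.
  assert (a * (exp (- (a / 2)) * exp (- (a / 2))) = 2 * exp (- (a/2)) * ((a / 2) * exp (- (a/2)))) by field.
  rewrite H2. replace (2 * exp (- (a / 2))) with (2 * exp (- (a / 2)) * 1) at 2 by ring.
  apply Rmult_le_compat_l. lra.
  nra.
Qed.

Lemma sin_sym_lb y t : 0 <= y -> 0 <= t <= PI ->
  exp (- (y * sin t / 2)) <= exp (- (y * t / 6)) + exp (- (y * (PI - t) / 6)).
Proof.
  intros Hy Ht. assert (P0 := PI_RGT_0).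
  pose proof (exp_pos (- (y * t / 6))). pose proof (exp_pos (- (y * (PI - t) / 6))).
  destruct (Rle_dec t (PI / 2)).
  - assert (t / 3 <= sin t) by (apply sin_lb3; lra).
    assert (exp (- (y * sin t / 2)) <= exp (- (y * t / 6))). { apply exp_mono. nra. } lra.
  - assert ((PI - t) / 3 <= sin (PI - t)) by (apply sin_lb3; lra).
    rewrite sin_PI_x in H1.
    assert (exp (- (y * sin t / 2)) <= exp (- (y * (PI - t) / 6))). { apply exp_mono. nra. } lra.
Qed.


Lemma RInt_scal_R (c : R) (f : R -> R) a b : ex_RInt f a b -> RInt (fun t => c * f t) a b = c * RInt f a b.
Proof.
  intro H. apply (is_RInt_unique (V:=R_CompleteNormedModule)).
  apply (is_RInt_scal (V:=R_NormedModule) f a b c). apply (RInt_correct (V:=R_CompleteNormedModule)). exact H.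
Qed.

Lemma cont_absJf n m y c t : continuous (fun t => c * Rabs (Jf n m y t)) t.
Proof.
  apply (continuous_mult (K:=R_AbsRing) (fun _ => c) (fun t => Rabs (Jf n m y t))).
  apply continuous_const. apply continuous_Rabs_comp. apply Jf_cont.
Qed.

Lemma pt_bound n m y t : (1 <= m)%nat -> 0 < y -> 0 <= t <= PI ->
  y ^ m * Rabs (Jf n m y t) <= INR (m - 1) ^ (m - 1) * (y * sin t * exp (- (y * sin t))).
Proof.
  intros Hm Hy Ht. unfold Jf. rewrite !Rabs_mult, <- RPow_abs.
  assert (Hs : 0 <= sin t) by (apply sin_ge_0; lra).
  rewrite (Rabs_pos_eq (sin t)) by auto. rewrite (Rabs_pos_eq (exp _)) by (left; apply exp_pos).
  assert (Hc : Rabs (cos (2 * INR n * t)) <= 1) by (apply Rabs_le; apply COS_bound).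
  assert (0 <= y * sin t) by nra.
  pose proof (key_pt m (y * sin t) Hm H).
  rewrite Rpow_mult_distr in H0. replace (-2 * (y * sin t)) with (-2 * y * sin t) in H0 by ring.
  assert (0 <= y ^ m * (sin t ^ m * exp (-2 * y * sin t))).
  { apply Rmult_le_pos. apply pow_le; lra. apply Rmult_le_pos. apply pow_le; lra. left; apply exp_pos. }
  replace (y ^ m * (sin t ^ m * exp (-2 * y * sin t) * Rabs (cos (2 * INR n * t))))
    with (y ^ m * (sin t ^ m * exp (-2 * y * sin t)) * Rabs (cos (2 * INR n * t))) by ring.
  apply Rle_trans with (y ^ m * (sin t ^ m * exp (-2 * y * sin t)) * 1).
  apply Rmult_le_compat_l; auto. lra.
Qed.

Lemma K_bound m : (1 <= m)%nat -> exists C, 0 <= C /\ forall n y, 0 < y -> Rabs (K n m y) <= C * Rmin y (/ y).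
Proof.
  intro Hm. set (Cm := INR (m - 1) ^ (m - 1)).
  assert (HC : 0 <= Cm) by (apply pow_le, pos_INR).
  exists (24 * Cm). split. lra. intros n y Hy.
  assert (P0 := PI_RGT_0). assert (P4 := PI_4).
  assert (B0 : Rabs (K n m y) <= RInt (fun t => y ^ m * Rabs (Jf n m y t)) 0 PI).
  { unfold K. rewrite Rabs_mult, Rabs_pos_eq by (apply pow_le; lra).
    rewrite RInt_scal_R. apply Rmult_le_compat_l. apply pow_le; lra.
    apply abs_RInt_le. lra. apply ex_RInt_Jf.
    apply (ex_RInt_continuous (V:=R_CompleteNormedModule)). intros.
    apply (continuous_ext (fun t => 1 * Rabs (Jf n m y t))). intros; apply Rmult_1_l. apply cont_absJf. }
  assert (ExA : ex_RInt (fun t => y ^ m * Rabs (Jf n m y t)) 0 PI).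
  { apply (ex_RInt_continuous (V:=R_CompleteNormedModule)). intros. apply cont_absJf. }
  assert (B1 : RInt (fun t => y ^ m * Rabs (Jf n m y t)) 0 PI <= PI * (Cm * y)).
  { apply Rle_trans with (RInt (fun _ => Cm * y) 0 PI).
    apply RInt_le. lra. exact ExA. apply ex_RInt_const.
    intros t Ht. eapply Rle_trans. apply pt_bound; auto; lra. fold Cm.
    apply Rmult_le_compat_l; auto. apply aexp_le_y.
    assert (0 <= sin t) by (apply sin_ge_0; lra). pose proof (SIN_bound t). nra.
    rewrite RInt_const. unfold scal; simpl. unfold mult; simpl. lra. }
  set (Hf := fun t => 2 * Cm * (6 / y) * (exp (- (y * (PI - t) / 6)) - exp (- (y * t / 6)))).
  set (h := fun t => 2 * Cm * (exp (- (y * t / 6)) + exp (- (y * (PI - t) / 6)))).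
  assert (IH : is_RInt h 0 PI (minus (Hf PI) (Hf 0))).
  { apply (is_RInt_derive (V:=R_CompleteNormedModule)).
    - intros t _. unfold Hf, h. auto_derive. auto. replace (- (y * (PI + - t) * / 6)) with (- (y * (PI - t) / 6)) by field. replace (- (y * t * / 6)) with (- (y * t / 6)) by field. field. lra.
    - intros t _. apply (ex_derive_continuous (K:=R_AbsRing) (V:=R_NormedModule)). unfold h. auto_derive. auto. }
  assert (B2 : RInt (fun t => y ^ m * Rabs (Jf n m y t)) 0 PI <= 24 * Cm / y).
  { apply Rle_trans with (RInt h 0 PI).
    apply RInt_le. lra. exact ExA. eexists; exact IH.
    intros t Ht. eapply Rle_trans. apply pt_bound; auto; lra. fold Cm. unfold h.
    assert (0 <= sin t) by (apply sin_ge_0; lra).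
    pose proof (aexp_le_2 (y * sin t) ltac:(nra)).
    pose proof (sin_sym_lb y t ltac:(lra) ltac:(lra)).
    replace (y * sin t / 2) with (y * sin t / 2) in H0 by ring.
    assert (y * sin t * exp (- (y * sin t)) <= 2 * (exp (- (y * t / 6)) + exp (- (y * (PI - t) / 6)))) by lra.
    replace (2 * Cm * (exp (- (y * t / 6)) + exp (- (y * (PI - t) / 6)))) with (Cm * (2 * (exp (- (y * t / 6)) + exp (- (y * (PI - t) / 6))))) by ring.
    apply Rmult_le_compat_l; auto.
    rewrite (is_RInt_unique (V:=R_CompleteNormedModule) _ _ _ _ IH).
    unfold Hf, minus, plus, opp; simpl. unfold plus, opp; simpl.
    replace (PI - PI) with 0 by ring. replace (y * 0 / 6) with 0 by field. rewrite Ropp_0, exp_0.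
    replace (PI - 0) with PI by ring.
    pose proof (exp_pos (- (y * PI / 6))).
    apply Rle_trans with (2 * Cm * (6 / y) * 2). 2: right; field; lra.
    assert (0 <= 2 * Cm * (6 / y)). { apply Rmult_le_pos. lra. apply Rdiv_le_0_compat; lra. }
    nra. }
  unfold Rmin. destruct (Rle_dec y (/ y)).
  - assert (0 <= Cm * y) by nra. assert (PI * (Cm * y) <= 24 * (Cm * y)) by (apply Rmult_le_compat_r; lra). lra.
  - replace (24 * Cm * / y) with (24 * Cm / y) by (field; lra). lra.
Qed.


Lemma Rmin_pos a b : 0 < a -> 0 < b -> 0 < Rmin a b.
Proof. intros; unfold Rmin; destruct Rle_dec; lra. Qed.

Lemma W_bound w : W w -> exists B, 0 <= B /\ forall n x, (1 <= n)%nat -> 0 < x ->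
  Rabs (w n x) <= B * (INR n * Rmin (INR n * x) (/ (INR n * x))).
Proof.
  induction 1.
  - destruct (K_bound m H) as [C [HC HK]]. exists C. split; auto. intros n x Hn Hx.
    assert (1 <= INR n) by (apply (le_INR 1); auto).
    unfold kf. rewrite Rabs_mult, Rabs_pos_eq by lra.
    specialize (HK n (INR n * x) ltac:(nra)).
    replace (C * (INR n * Rmin (INR n * x) (/ (INR n * x)))) with (INR n * (C * Rmin (INR n * x) (/ (INR n * x)))) by ring.
    apply Rmult_le_compat_l; lra.
  - destruct IHW1 as [B1 [P1 H1]]. destruct IHW2 as [B2 [P2 H2]].
    exists (B1 + B2). split. lra. intros n x Hn Hx.
    specialize (H1 n x Hn Hx). specialize (H2 n x Hn Hx).
    eapply Rle_trans. apply Rabs_triang. lra.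
  - destruct (Cf_bound r H) as [Br [Pr Hr]]. destruct IHW as [B [P Hw]].
    exists (Br * B). split. nra. intros n x Hn Hx.
    assert (1 <= INR n) by (apply (le_INR 1); auto).
    assert (0 < INR n * x) by nra.
    assert (0 < INR n * Rmin (INR n * x) (/ (INR n * x))).
    { apply Rmult_lt_0_compat. lra. apply Rmin_pos; auto. apply Rinv_0_lt_compat; auto. }
    rewrite Rabs_mult. rewrite Rmult_assoc. apply Rmult_le_compat; try apply Rabs_pos; auto.
Qed.

Lemma ln_le' a b : 0 < a -> a <= b -> ln a <= ln b.
Proof. intros Ha Hab. destruct (Rle_lt_or_eq_dec a b Hab). left; apply ln_increasing; auto. subst; lra. Qed.

Lemma min_bound y x d : 0 < y -> 0 < x -> x <= y -> 0 <= d <= 1 ->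
  Rmin y (/ y) * (1 + x) <= 2 * Rpower y d.
Proof.
  intros Hy Hx Hxy Hd. unfold Rmin, Rpower. destruct (Rle_dec y (/ y)).
  - assert (y <= 1). { destruct (Rle_dec y 1); auto. assert (/ y < 1). { rewrite <- Rinv_1. apply Rinv_lt_contravar; lra. } lra. }
    assert (ln y <= 0) by (rewrite <- ln_1; apply ln_le'; lra).
    assert (exp (ln y) <= exp (d * ln y)) by (apply exp_mono; nra).
    rewrite exp_ln in H1 by lra. nra.
  - assert (1 < y). { destruct (Rlt_dec 1 y); auto. assert (1 <= / y). { rewrite <- Rinv_1. apply Rinv_le_contravar; lra. } lra. }
    assert (0 <= ln y) by (rewrite <- ln_1; apply ln_le'; lra).
    assert (exp 0 <= exp (d * ln y)) by (apply exp_mono; nra). rewrite exp_0 in H1.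
    assert (/ y < 1) by (rewrite <- Rinv_1; apply Rinv_lt_contravar; lra).
    assert (/ y * x <= 1). { replace 1 with (/ y * y) by (field; lra). apply Rmult_le_compat_l; try lra. left; apply Rinv_0_lt_compat; lra. }
    nra.
Qed.

Lemma final_arith (N : nat) (d B nr x : R) : 1 <= nr -> 0 < x -> 0 <= d < 1 / 3 -> 0 <= B ->
  / nr ^ (2 * S N) * (B * (nr * Rmin (nr * x) (/ (nr * x)))) <=
  (2 * B + 1) / Rpower nr (2 * INR N + 2 / 3 - d) * (Rpower x d / (1 + x)).
Proof.
  intros Hn Hx Hd HB.
  set (y := nr * x). assert (Hy : 0 < y) by (unfold y; nra).
  set (R := Rpower y d). assert (HR : 0 < R) by (unfold R, Rpower; apply exp_pos).
  assert (Ex : Rpower x d = R / Rpower nr d).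
  { unfold R, y. rewrite <- Rpower_mult_distr by lra. field. unfold Rpower. apply Rgt_not_eq, exp_pos. }
  set (Q := Rpower nr (2 * INR N + 2 / 3)).
  assert (EQ : Rpower nr (2 * INR N + 2 / 3 - d) * Rpower nr d = Q).
  { unfold Q. rewrite <- Rpower_plus. f_equal. ring. }
  set (P := nr ^ (2 * N + 1)).
  assert (HQP : Q <= P).
  { unfold Q, P. rewrite <- Rpower_pow by lra. apply Rle_Rpower. lra.
    rewrite plus_INR, mult_INR. simpl. lra. }
  assert (HQ : 0 < Q) by (unfold Q, Rpower; apply exp_pos).
  assert (Hd1 : 0 < Rpower nr d) by (unfold Rpower; apply exp_pos).
  assert (Ha : 0 < Rpower nr (2 * INR N + 2 / 3 - d)) by (unfold Rpower; apply exp_pos).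
  assert (ERHS : (2 * B + 1) / Rpower nr (2 * INR N + 2 / 3 - d) * (Rpower x d / (1 + x)) = (2 * B + 1) * R / (Q * (1 + x))).
  { rewrite Ex, <- EQ. field. repeat split; lra. }
  assert (HP : nr ^ (2 * S N) = P * nr).
  { unfold P. replace (2 * S N)%nat with (2 * N + 1 + 1)%nat by lia. rewrite pow_add. simpl. ring. }
  rewrite ERHS, HP. fold y.
  set (mn := Rmin y (/ y)).
  assert (Hm : 0 < mn) by (unfold mn; apply Rmin_pos; auto; apply Rinv_0_lt_compat; auto).
  assert (Hmb : mn * (1 + x) <= 2 * R).
  { unfold mn, R. apply min_bound; auto. unfold y; nra. lra. }
  assert (HPpos : 0 < P) by lra.
  replace (/ (P * nr) * (B * (nr * mn))) with (B * mn / P) by (field; lra).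
  apply Rle_trans with (B * mn / Q).
  { unfold Rdiv. apply Rmult_le_compat_l. nra. apply Rinv_le_contravar; lra. }
  unfold Rdiv. rewrite Rinv_mult.
  assert (B * mn * (1 + x) <= (2 * B + 1) * R) by nra.
  apply Rmult_le_reg_r with (Q * (1 + x)). nra.
  replace (B * mn * / Q * (Q * (1 + x))) with (B * mn * (1 + x)) by (field; lra).
  replace ((2 * B + 1) * R * (/ Q * / (1 + x)) * (Q * (1 + x))) with ((2 * B + 1) * R) by (field; lra).
  lra.
Qed.

Theorem proposition3p3 :
  forall (N : nat) (delta : R), 0 <= delta < 1 / 3 ->
  exists C0 : R, 0 < C0 /\
    forall (n : nat) (x : R), (1 <= n)%nat -> 0 < x ->
      Cmod (g n N x) <=
        C0 / Rpower (INR n) (2 * INR N + 2 / 3 - delta) * (Rpower x delta / (1 + x)).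
Proof.
  intros N delta Hd.
  destruct (T_W N) as [w [Hw Ew]]. destruct (W_bound w Hw) as [B [HB Bw]].
  exists (2 * B + 1). split. lra.
  intros n x Hn Hx.
  assert (Hn1 : 1 <= INR n) by (apply (le_INR 1); auto).
  unfold g, varphi. rewrite phi_real. rewrite <- RtoC_mult, <- RtoC_minus, Cmod_R.
  replace (INR n * J n 0 (INR n * x)) with (kf n 0 x) by (unfold kf, K; simpl; ring).
  rewrite sum_id by auto. rewrite Ew by auto.
  rewrite Rabs_mult, Rabs_pos_eq.
  2: { left. apply Rinv_0_lt_compat. apply pow_lt. lra. }
  eapply Rle_trans. apply Rmult_le_compat_l. left. apply Rinv_0_lt_compat. apply pow_lt. lra.
  apply Bw; auto.
  apply final_arith; auto.
Qed.
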